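(* Let $\gamma\ge1$ and consider the SIEMS3 coefficients $(a_0,a_1,a_2)=(\gamma^2+\gamma-\tfrac16,\ \tfrac56-2\gamma^2,\ \gamma^2-\gamma+\tfrac13)$, $(b_0,\dots,b_3)=(\gamma^2,\ 2\gamma-2\gamma^2,\ \gamma^2-2\gamma+1,\ 0)$, $(c_0,c_1,c_2)=(\gamma^2+2\gamma,\ -2\gamma^2-2\gamma+1,\ \gamma^2)$. Then $$\sigma_{\mathrm{F}}=1,\quad\sigma_{\mathrm{E}}=\frac{3(4\gamma^2+4\gamma-1)}{12\gamma^2-2},\quad\lambda_{\mathrm{I}}=\frac{3(2\gamma-1)^2}{12\gamma^2-2},\quad\text{so that}\quad\mathfrak{I}_{\mathrm{IE}}=\frac{(2\gamma-1)^2}{4\gamma^2+4\gamma-1}.$$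
   Context: For coefficient vectors $(a_j)_{j=0}^{\mathrm{k}-1}$, $(b_j)_{j=0}^{\mathrm{k}}$, $(c_j)_{j=0}^{\mathrm{k}-1}$ define $a(\theta)=\sum_j a_je^{\imath j\theta}$, $b(\theta)=\sum_j b_je^{\imath j\theta}$, $c(\theta)=\sum_jc_je^{\imath j\theta}$ and $\sigma_{\mathrm{F}}=\max_{\theta\in[0,2\pi)}|1/a(\theta)|$, $\sigma_{\mathrm{E}}=\max_{\theta\in[0,2\pi)}|c(\theta)/a(\theta)|$, $\lambda_{\mathrm{I}}=\min_{\theta\in[0,2\pi)}\Re[b(\theta)/a(\theta)]$, $\mathfrak{I}_{\mathrm{IE}}=\lambda_{\mathrm{I}}/\sigma_{\mathrm{E}}$. Here $\mathrm{k}=3$. *)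

(* Defs.v *)
From Stdlib Require Import Reals Lra List.
Import ListNotations.
From Coquelicot Require Import Coquelicot.
Open Scope R_scope.

Definition expi (t : R) : C := (cos t, sin t).

Fixpoint trigpoly_from (j0 : nat) (l : list R) (theta : R) : C :=
  match l with
  | nil => RtoC 0
  | x :: l' => Cplus (Cmult (RtoC x) (expi (INR j0 * theta)))
                     (trigpoly_from (S j0) l' theta)
  end.

Definition trigpoly (l : list R) (theta : R) : C := trigpoly_from 0 l theta.

Definition IsMaxOn02pi (f : R -> R) (M : R) : Prop :=
  (exists t, 0 <= t < 2 * PI /\ f t = M) /\
  (forall t, 0 <= t < 2 * PI -> f t <= M).

Definition IsMinOn02pi (f : R -> R) (m : R) : Prop :=
  (exists t, 0 <= t < 2 * PI /\ f t = m) /\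
  (forall t, 0 <= t < 2 * PI -> m <= f t).

Definition sigF_fun (a : list R) (theta : R) : R := Cmod (Cinv (trigpoly a theta)).
Definition sigE_fun (a c : list R) (theta : R) : R :=
  Cmod (Cdiv (trigpoly c theta) (trigpoly a theta)).
Definition lamI_fun (a b : list R) (theta : R) : R :=
  Re (Cdiv (trigpoly b theta) (trigpoly a theta)).

Definition siems3_a (g : R) : list R :=
  [g^2 + g - 1/6; 5/6 - 2 * g^2; g^2 - g + 1/3].
Definition siems3_b (g : R) : list R :=
  [g^2; 2 * g - 2 * g^2; g^2 - 2 * g + 1; 0].
Definition siems3_c (g : R) : list R :=
  [g^2 + 2 * g; - 2 * g^2 - 2 * g + 1; g^2].

(* Main.v *)
Require Import Defs.
From Stdlib Require Import Reals Lra List.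
Import ListNotations.
From Coquelicot Require Import Coquelicot.
Open Scope R_scope.
Lemma tp3 x0 x1 x2 t : trigpoly [x0;x1;x2] t =
  (x0 + x1*cos t + x2*(2*cos t^2 - 1), x1*sin t + x2*(2*sin t*cos t)).
Proof.
  unfold trigpoly, trigpoly_from, expi.
  replace (INR 0 * t) with 0 by (simpl; ring).
  replace (INR 1 * t) with t by (simpl; ring).
  replace (INR 2 * t) with (2*t) by (simpl; ring).
  rewrite cos_0, sin_0, cos_2a_cos, sin_2a.
  apply injective_projections; simpl; ring.
Qed.
Lemma tp4 x0 x1 x2 t : trigpoly [x0;x1;x2;0] t =
  (x0 + x1*cos t + x2*(2*cos t^2 - 1), x1*sin t + x2*(2*sin t*cos t)).
Proof.
  unfold trigpoly, trigpoly_from, expi.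
  replace (INR 0 * t) with 0 by (simpl; ring).
  replace (INR 1 * t) with t by (simpl; ring).
  replace (INR 2 * t) with (2*t) by (simpl; ring).
  rewrite cos_0, sin_0, cos_2a_cos, sin_2a.
  apply injective_projections; simpl; ring.
Qed.
Lemma H1 p q : 1 <= p^2+q^2 -> Cmod (Cinv (p,q)) <= 1.
Proof.
  intro H. unfold Cmod, Cinv; cbn [fst snd].
  assert (E : (p / (p^2+q^2))^2 + (- q / (p^2+q^2))^2 = / (p^2+q^2)) by (field; lra).
  rewrite E. apply Rle_trans with (sqrt 1); [apply sqrt_le_1_alt | rewrite sqrt_1; lra].
  rewrite <- Rinv_1. apply Rinv_le_contravar; lra.
Qed.

Lemma H1eq : Cmod (Cinv (1,0)) = 1.
Proof.
  unfold Cmod, Cinv; cbn [fst snd].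
  assert (E : (1 / (1^2+0^2))^2 + (- 0 / (1^2+0^2))^2 = 1) by field.
  rewrite E. apply sqrt_1.
Qed.

Lemma H2 N D p q r s : 0 < D -> 0 <= N -> 0 < r^2+s^2 ->
  D^2*(p^2+q^2) <= N^2*(r^2+s^2) -> Cmod (Cdiv (p,q) (r,s)) <= N/D.
Proof.
  intros HD HN Hr H.
  assert (Hz : (r,s) <> RtoC 0).
  { intro E. injection E as E1 E2. subst. lra. }
  rewrite Cmod_div by exact Hz.
  assert (Ha : 0 < Cmod (r,s)).
  { unfold Cmod; simpl. apply sqrt_lt_R0. simpl in Hr. lra. }
  assert (Hb : 0 <= Cmod (p,q)) by apply Cmod_ge_0.
  assert (K : D * Cmod (p,q) <= N * Cmod (r,s)).
  { apply Rsqr_incr_0_var.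
    - rewrite !Rsqr_mult. unfold Cmod; simpl. rewrite !Rsqr_sqrt.
      + unfold Rsqr. simpl in H. nra.
      + nra.
      + nra.
    - apply Rmult_le_pos; lra. }
  apply Rmult_le_reg_r with (Cmod (r,s)); [exact Ha|].
  apply Rmult_le_reg_l with D; [exact HD|].
  replace (D * (Cmod (p, q) / Cmod (r, s) * Cmod (r, s))) with (D * Cmod (p,q)) by (field; lra).
  replace (D * (N / D * Cmod (r, s))) with (N * Cmod (r,s)) by (field; lra).
  exact K.
Qed.

Lemma H2eq p r : 0 <= p -> 0 < r -> Cmod (Cdiv (p,0) (r,0)) = p/r.
Proof.
  intros Hp Hr.
  assert (Hz : (r,0) <> RtoC 0).
  { intro E. injection E as E1. lra. }
  rewrite Cmod_div by exact Hz.
  unfold Cmod; simpl.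
  replace (p * (p * 1) + 0 * (0 * 1)) with (Rsqr p) by (unfold Rsqr; ring).
  replace (r * (r * 1) + 0 * (0 * 1)) with (Rsqr r) by (unfold Rsqr; ring).
  rewrite !sqrt_Rsqr by lra. reflexivity.
Qed.

Lemma H3 p q r s : 0 < r^2+s^2 -> Re (Cdiv (p,q) (r,s)) = (p*r+q*s)/(r^2+s^2).
Proof.
  intro H. unfold Cdiv, Cmult, Cinv, Re; simpl. simpl in H. field. lra.
Qed.

Ltac pp := first [lra | apply pow_le; lra | apply Rplus_le_le_0_compat; pp | apply Rmult_le_pos; pp].

Lemma P1 g c s : 1 <= g -> -1 <= c <= 1 -> s^2 + c^2 - 1 = 0 -> 1 <= (((g^2 + g - 1/6) + (5/6 - 2 * g^2)*c + (g^2 - g + 1/3)*(2*c^2 - 1))^2 + ((5/6 - 2 * g^2)*s + (g^2 - g + 1/3)*(2*s*c))^2).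
Proof.
  intros Hg Hc Hs.
  assert (X : (((g^2 + g - 1/6) + (5/6 - 2 * g^2)*c + (g^2 - g + 1/3)*(2*c^2 - 1))^2 + ((5/6 - 2 * g^2)*s + (g^2 - g + 1/3)*(2*s*c))^2) - 1 = (1-c)*((1/6 + 4*(g-1) + 4*(g-1)^2) + (22/9 + 34/3*(g-1) + 62/3*(g-1)^2 + 16*(g-1)^3 + 4*(g-1)^4)*(1-c)) + ((5/6 - 2 * g^2) + 2*(g^2 - g + 1/3)*c)^2*(s^2+c^2-1)) by field.
  rewrite Hs, Rmult_0_r, Rplus_0_r in X.
  assert (0 <= (1-c)*((1/6 + 4*(g-1) + 4*(g-1)^2) + (22/9 + 34/3*(g-1) + 62/3*(g-1)^2 + 16*(g-1)^3 + 4*(g-1)^4)*(1-c))); [|lra].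
  apply Rmult_le_pos; [lra|]. apply Rplus_le_le_0_compat; [pp|apply Rmult_le_pos; [pp|lra]].
Qed.

Lemma P2 g c s : 1 <= g -> -1 <= c <= 1 -> s^2 + c^2 - 1 = 0 -> (12 * g^2 - 2)^2 * (((g^2 + 2 * g) + (- 2 * g^2 - 2 * g + 1)*c + (g^2)*(2*c^2 - 1))^2 + ((- 2 * g^2 - 2 * g + 1)*s + (g^2)*(2*s*c))^2) <= (3 * (4 * g^2 + 4 * g - 1))^2 * (((g^2 + g - 1/6) + (5/6 - 2 * g^2)*c + (g^2 - g + 1/3)*(2*c^2 - 1))^2 + ((5/6 - 2 * g^2)*s + (g^2 - g + 1/3)*(2*s*c))^2).
Proof.
  intros Hg Hc Hs.
  assert (X : (3 * (4 * g^2 + 4 * g - 1))^2 * (((g^2 + g - 1/6) + (5/6 - 2 * g^2)*c + (g^2 - g + 1/3)*(2*c^2 - 1))^2 + ((5/6 - 2 * g^2)*s + (g^2 - g + 1/3)*(2*s*c))^2) - (12 * g^2 - 2)^2 * (((g^2 + 2 * g) + (- 2 * g^2 - 2 * g + 1)*c + (g^2)*(2*c^2 - 1))^2 + ((- 2 * g^2 - 2 * g + 1)*s + (g^2)*(2*s*c))^2) = (c+1)*((341/2 + 516*(g-1) + 492*(g-1)^2 + 144*(g-1)^3) + (122 + 1066*(g-1) + 3142*(g-1)^2 + 4176*(g-1)^3 + 2556*(g-1)^4 + 576*(g-1)^5)*(1-c)) + ((3 * (4 * g^2 + 4 * g - 1))^2*((5/6 - 2 * g^2) + 2*(g^2 -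 g + 1/3)*c)^2 - (12 * g^2 - 2)^2*((- 2 * g^2 - 2 * g + 1) + 2*(g^2)*c)^2)*(s^2+c^2-1)) by field.
  rewrite Hs, Rmult_0_r, Rplus_0_r in X.
  assert (0 <= (c+1)*((341/2 + 516*(g-1) + 492*(g-1)^2 + 144*(g-1)^3) + (122 + 1066*(g-1) + 3142*(g-1)^2 + 4176*(g-1)^3 + 2556*(g-1)^4 + 576*(g-1)^5)*(1-c))); [|lra].
  apply Rmult_le_pos; [lra|]. apply Rplus_le_le_0_compat; [pp|apply Rmult_le_pos; [pp|lra]].
Qed.

Lemma P3 g c s : 1 <= g -> -1 <= c <= 1 -> s^2 + c^2 - 1 = 0 -> (3 * (2 * g - 1)^2) * (((g^2 + g - 1/6) + (5/6 - 2 * g^2)*c + (g^2 - g + 1/3)*(2*c^2 - 1))^2 + ((5/6 - 2 * g^2)*s + (g^2 - g + 1/3)*(2*s*c))^2) <= (12 * g^2 - 2) * (((g^2) + (2 * g - 2 * g^2)*c + (g^2 - 2 * g + 1)*(2*c^2 - 1))*((g^2 + g - 1/6) + (5/6 - 2 * g^2)*c + (g^2 - g + 1/3)*(2*c^2 - 1)) + ((2 * g - 2 * g^2)*s + (g^2 - 2 * g + 1)*(2*s*c))*((5/6 - 2 * g^2)*s + (g^2 - g + 1/3)*(2*s*c))).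
Proof.
  intros Hg Hc Hs.
  assert (X : (12 * g^2 - 2) * (((g^2) + (2 * g - 2 * g^2)*c + (g^2 - 2 * g + 1)*(2*c^2 - 1))*((g^2 + g - 1/6) + (5/6 - 2 * g^2)*c + (g^2 - g + 1/3)*(2*c^2 - 1)) + ((2 * g - 2 * g^2)*s + (g^2 - 2 * g + 1)*(2*s*c))*((5/6 - 2 * g^2)*s + (g^2 - g + 1/3)*(2*s*c))) - (3 * (2 * g - 1)^2) * (((g^2 + g - 1/6) + (5/6 - 2 * g^2)*c + (g^2 - g + 1/3)*(2*c^2 - 1))^2 + ((5/6 - 2 * g^2)*s + (g^2 - g + 1/3)*(2*s*c))^2) = (c+1)*((7/2 + 6*(g-1)) + (2/3 + 14*(g-1) + 36*(g-1)^2 + 24*(g-1)^3)*(1-c)) + ((12 * g^2 - 2)*((2 * g - 2 * g^2) + 2*(g^2 - 2 * g + 1)*c)*((5/6 - 2 * g^2) + 2*(g^2 - g + 1/3)*c) - (3 * (2 * g - 1)^2)*((5/6 - 2 * g^2) + 2*(g^2 - g + 1/3)*c)^2)*(s^2+c^2-1)) by field.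
  rewrite Hs, Rmult_0_r, Rplus_0_r in X.
  assert (0 <= (c+1)*((7/2 + 6*(g-1)) + (2/3 + 14*(g-1) + 36*(g-1)^2 + 24*(g-1)^3)*(1-c))); [|lra].
  apply Rmult_le_pos; [lra|]. apply Rplus_le_le_0_compat; [pp|apply Rmult_le_pos; [pp|lra]].
Qed.

Theorem mainTheorem10 (g : R) (hg : 1 <= g) :
  let sigmaE := 3 * (4 * g^2 + 4 * g - 1) / (12 * g^2 - 2) in
  let lambdaI := 3 * (2 * g - 1)^2 / (12 * g^2 - 2) in
  IsMaxOn02pi (sigF_fun (siems3_a g)) 1 /\
  IsMaxOn02pi (sigE_fun (siems3_a g) (siems3_c g)) sigmaE /\
  IsMinOn02pi (lamI_fun (siems3_a g) (siems3_b g)) lambdaI /\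
  lambdaI / sigmaE = (2 * g - 1)^2 / (4 * g^2 + 4 * g - 1).
Proof.
  intros sigmaE lambdaI.
  assert (HD : 0 < 12 * g^2 - 2) by nra.
  assert (HN : 0 < 4 * g^2 + 4 * g - 1) by nra.
  assert (HPI := PI_RGT_0).
  assert (Hs : forall t, sin t ^ 2 + cos t ^ 2 - 1 = 0).
  { intro t. rewrite <- (sin2_cos2 t). unfold Rsqr. ring. }
  assert (Hq : forall t, 0 < (g^2 + g - 1/6 + (5/6 - 2 * g^2)*cos t + (g^2 - g + 1/3)*(2*cos t^2 - 1))^2
      + ((5/6 - 2 * g^2)*sin t + (g^2 - g + 1/3)*(2*sin t*cos t))^2).
  { intro t. pose proof (P1 g (cos t) (sin t) hg (COS_bound t) (Hs t)). lra. }
  split; [|split; [|split]].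
  - split.
    + exists 0. split; [lra|]. unfold sigF_fun, siems3_a. rewrite tp3, cos_0, sin_0.
      replace (g ^ 2 + g - 1 / 6 + (5 / 6 - 2 * g ^ 2) * 1 + (g ^ 2 - g + 1 / 3) * (2 * 1 ^ 2 - 1),
               (5 / 6 - 2 * g ^ 2) * 0 + (g ^ 2 - g + 1 / 3) * (2 * 0 * 1)) with (1, 0)
        by (apply injective_projections; simpl; field).
      apply H1eq.
    + intros t _. unfold sigF_fun, siems3_a. rewrite tp3. apply H1.
      apply (P1 g (cos t) (sin t) hg (COS_bound t) (Hs t)).
  - split.
    + exists PI. split; [lra|]. unfold sigE_fun, siems3_a, siems3_c. rewrite !tp3, cos_PI, sin_PI.
      replace (g ^ 2 + g - 1 / 6 + (5 / 6 - 2 * g ^ 2) * -1 + (g ^ 2 - g + 1 / 3) * (2 * (-1) ^ 2 - 1),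
               (5 / 6 - 2 * g ^ 2) * 0 + (g ^ 2 - g + 1 / 3) * (2 * 0 * -1)) with ((12 * g^2 - 2)/3, 0)
        by (apply injective_projections; simpl; field).
      replace (g ^ 2 + 2 * g + (- 2 * g ^ 2 - 2 * g + 1) * -1 + g ^ 2 * (2 * (-1) ^ 2 - 1),
               (- 2 * g ^ 2 - 2 * g + 1) * 0 + g ^ 2 * (2 * 0 * -1)) with (4 * g^2 + 4 * g - 1, 0)
        by (apply injective_projections; simpl; field).
      rewrite H2eq by lra. unfold sigmaE. field. lra.
    + intros t _. unfold sigE_fun, siems3_a, siems3_c. rewrite !tp3. unfold sigmaE.
      apply H2; try lra.
      * apply Hq.
      * apply (P2 g (cos t) (sin t) hg (COS_bound t) (Hs t)).
  - split.
    + exists PI. split; [lra|]. unfold lamI_fun, siems3_a, siems3_b. rewrite tp3, tp4, cos_PI, sin_PI.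
      rewrite H3.
      * unfold lambdaI. field. lra.
      * nra.
    + intros t _. unfold lamI_fun, siems3_a, siems3_b. rewrite tp3, tp4.
      rewrite H3 by apply Hq.
      pose proof (P3 g (cos t) (sin t) hg (COS_bound t) (Hs t)) as K.
      pose proof (Hq t) as Q.
      unfold lambdaI.
      apply Rmult_le_reg_r with (12 * g^2 - 2); [lra|].
      apply Rmult_le_reg_r with ((g ^ 2 + g - 1 / 6 + (5 / 6 - 2 * g ^ 2) * cos t + (g ^ 2 - g + 1 / 3) * (2 * cos t ^ 2 - 1)) ^ 2 +
           ((5 / 6 - 2 * g ^ 2) * sin t + (g ^ 2 - g + 1 / 3) * (2 * sin t * cos t)) ^ 2); [lra|].
      field_simplify; try lra.
  - unfold lambdaI, sigmaE. field. split; lra.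
Qed.
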